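(* A nontrivial commutative ring $A$ is an integral domain if and only if $A$ is the only nonzero ideal of $A$ that is also a factroid of $A$.
   Context: A factroid of $A$ is an additive subgroup $F$ of $A$ such that for all $a\in A$ and every nonzerodivisor $b$ of $A$, $ba\in F$ implies $a\in F$. *)

(* Defs.v *)
From HB Require Import structures.
From mathcomp Require Import all_boot all_algebra.
Set Implicit Arguments. Unset Strict Implicit. Unset Printing Implicit Defensive.
Import GRing.Theory.
Local Open Scope ring_scope.

Definition is_add_subgroup (A : comNzRingType) (F : A -> Prop) : Prop :=
  F 0 /\ (forall x y, F x -> F y -> F (x - y)).

Definition is_ideal (A : comNzRingType) (I : A -> Prop) : Prop :=
  is_add_subgroup I /\ (forall r x, I x -> I (r * x)).

Definition nonzerodivisor (A : comNzRingType) (b : A) : Prop :=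
  forall a : A, b * a = 0 -> a = 0.

Definition is_factroid (A : comNzRingType) (F : A -> Prop) : Prop :=
  is_add_subgroup F /\
  (forall a b : A, nonzerodivisor b -> F (b * a) -> F a).

Definition nonzero_set (A : comNzRingType) (I : A -> Prop) : Prop :=
  exists x, I x /\ x <> 0.

(* A is an integral domain (nontriviality is built into comNzRingType) *)
Definition is_integral_domain (A : comNzRingType) : Prop :=
  forall a b : A, a * b = 0 -> a = 0 \/ b = 0.

(* Main.v *)
Require Import Defs.
From mathcomp Require Import all_boot all_algebra.
Local Open Scope ring_scope.
Import GRing.Theory.

Theorem proposition4p9 (A : comNzRingType) :
  is_integral_domain A <->
  (forall I : A -> Prop,
     (is_ideal I /\ nonzero_set I /\ is_factroid I) <-> (forall x, I x)).
Proof.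
split.
- move=> dom I; split.
  + move=> [[_ Im] [[x [Ix x0]] [_ Fm]]] a.
    apply: (Fm a x); last by rewrite mulrC; apply: Im.
    by move=> c /dom [Hx|//]; case: x0.
  + move=> HI; split; first by split; [split|].
    split; last by split; [split|].
    by exists 1; split => //; apply/eqP; apply: oner_neq0.
- move=> H a b ab0.
  case: (eqVneq a 0) => [->|a0]; first by left.
  right; apply/eqP; apply/negP => b0.
  have : (1 : A) * b = 0.
    apply: (H (fun x => x * b = 0)).1; split; [split; [split|]|split].
    * by rewrite mul0r.
    * by move=> x y hx hy; rewrite mulrBl hx hy subrr.
    * by move=> r x hx; rewrite -mulrA hx mulr0.
    * by exists a; split; [rewrite ab0|apply/eqP].
    * split; first split.
      - by rewrite mul0r.
      - by move=> x y hx hy; rewrite mulrBl hx hy subrr.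
      - by move=> x c nz hc; apply: nz; rewrite mulrA.
  by rewrite mul1r => hb; move: b0; rewrite hb eqxx.
Qed.
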